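(* Consider an infinite execution $\gamma_0\gamma_1\ldots$ of the unison dynamics with $\gamma_0$ satisfying $WU_0$, in which every process increments its clock infinitely often, and let $\bot_0$, $\widetilde{p^t.r}$, $t_{p,k}$ and $C_k$ be as in the context. Then for every integer $k\ge \bot_0+D$, $C_k$ is a well-defined coherent cut.
   Context: Let $G=(V,E)$ be a finite connected undirected graph, $|V|=n\ge 2$, $\mathcal N_p$ the set of neighbors of $p$, $d(p,q)$ the hop distance, $D$ the diameter, and $V(p,r)=\{q\in V: d(p,q)\le r\}$. Fix an integer $M\ge 3$; for an integer $a$, $\bar a\in\{0,\dots,M-1\}$ denotes its residue modulo $M$. Each process $p$ holds a clock $p.r\in\{0,\dots,M-1\}$; $p^t.r$ denotes its value in configuration $\gamma_t$. Integers $a,b$ are locally comparable if $\min(\overline{a-b},\overline{b-a})\le 1$, and then $b\ominus a=\overline{b-a}$ if $\overline{b-a}\le 1$, and $b\ominus a=-\overline{a-b}$ otherwise. A configuration satisfies $WU$ if for every edge $\{p,q\}$, $p.r$ and $q.r$ are locally comparable. The delay of a path $\mu=p_0p_1\ldots p_k$ is $\delta_\mu=\sum_{i=0}^{k-1}(p_{i+1}.r\ominus p_i.r)$ ($0$ if $k=0$). A configuration satisfies $WU_0$ if it satisfies $WU$ and the delay is intrinsic: for all $p,q$, all paths from $p$ to $q$ have the same delay, denoted $\delta_{(p,q)}$ ($\delta^t_{(p,q)}$ in $\gamma_t$). Dynamics: a process $p$ is enabled iff for every $q\in\mathcal N_p$, $q.r=p.r$ or $q.r=\overline{p.r+1}$.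 In a transition $\gamma_t\to\gamma_{t+1}$ a nonempty set of processes enabled in $\gamma_t$ is chosen (by an arbitrary, possibly unfair, daemon) and each of them sets $p.r:=\overline{p.r+1}$; other clocks are unchanged. Events: $(p,0)$ is an event for every $p$; $(p,t+1)$ is an event iff $p$ increments in $\gamma_t\to\gamma_{t+1}$. Causal relation $\leadsto$: for an event $(p,t)$ with $t>0$, $(p,t')\leadsto(p,t)$ where $t'$ is the largest time $<t$ such that $(p,t')$ is an event, and for each $q\in\mathcal N_p$, $(q,t')\leadsto(p,t)$ where $t'$ is the largest time $<t$ such that $(q,t')$ is an event. $\preceq$ is the reflexive–transitive closure of $\leadsto$. Lifting: assume $\gamma_0$ satisfies $WU_0$. Choose $p_0$ with $\delta^0_{(p_0,q)}\ge 0$ for all $q\in V$, and let $\bot_0=p_0^0.r$. Define integers $\widetilde{p^t.r}$ by $\widetilde{p^0.r}=\bot_0+\delta^0_{(p_0,p)}$, and $\widetilde{p^{t+1}.r}=\widetilde{p^t.r}+1$ if $p$ increments in $\gamma_t\to\gamma_{t+1}$, $\widetilde{p^{t+1}.r}=\widetilde{p^t.r}$ otherwise. For an integer $k$, $t_{p,k}$ is the smallest $t$ with $\widetilde{p^t.r}=k$, and $C_k=\{(p,t_{p,k}):p\in V\}$. A cut is a map $C:p\mapsto t^C_p$ (identified with the set $\{(p,t^C_p)\}$) such that each $(p,t^C_p)$ is an event. A cut $C$ is coherent if whenever $(q,t')\preceq(p,t)\preceq(p,t^C_p)$, then $(q,t')\preceq(q,t^C_q)$. *)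

(* Defs.v *)
From HB Require Import structures.
From mathcomp Require Import all_boot all_order all_algebra.
From Stdlib Require Import Relations.
Set Implicit Arguments. Unset Strict Implicit. Unset Printing Implicit Defensive.
Import Order.TTheory GRing.Theory Num.Theory.
Local Open Scope ring_scope.

Definition resid (M : nat) (a : int) : int := (a %% M%:Z)%Z.

Definition loc_comp (M : nat) (a b : int) : bool :=
  Num.min (resid M (a - b)) (resid M (b - a)) <= 1.

Definition ominus (M : nat) (b a : int) : int :=
  if resid M (b - a) <= 1 then resid M (b - a) else - resid M (a - b).

Section Defs.
Variables (V : finType) (e : rel V) (M : nat).

Definition WU (c : V -> nat) : Prop :=
  forall p q, e p q -> loc_comp M (c p)%:Z (c q)%:Z.

Fixpoint delay (c : V -> nat) (x : V) (s : seq V) : int :=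
  match s with
  | [::] => 0
  | y :: s' => ominus M (c y)%:Z (c x)%:Z + delay c y s'
  end.

Definition intrinsic_delay (c : V -> nat) : Prop :=
  forall p s1 s2, path e p s1 -> path e p s2 -> last p s1 = last p s2 ->
    delay c p s1 = delay c p s2.

Definition WU0 (c : V -> nat) : Prop := WU c /\ intrinsic_delay c.

Definition delta_spec (c : V -> nat) (delta : V -> V -> int) : Prop :=
  forall p s, path e p s -> delay c p s = delta p (last p s).

Definition enabled (c : V -> nat) (p : V) : Prop :=
  forall q, e p q -> c q = c p \/ c q = ((c p).+1 %% M)%N.

(* S t = set of processes chosen by the daemon in gamma_t -> gamma_{t+1} *)
Definition execution (gamma : nat -> V -> nat) (S : nat -> {set V}) : Prop :=
  forall t, [/\ S t != set0,
               (forall p, p \in S t -> enabled (gamma t) p) &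
               (forall p, gamma t.+1 p =
                  if p \in S t then ((gamma t p).+1 %% M)%N else gamma t p)].

Definition fair (S : nat -> {set V}) : Prop :=
  forall p t, exists t', (t <= t')%N /\ p \in S t'.

Definition is_event (S : nat -> {set V}) (p : V) (t : nat) : Prop :=
  t = 0%N \/ exists t0, t = t0.+1 /\ p \in S t0.

Definition last_event_before (S : nat -> {set V}) (q : V) (t t' : nat) : Prop :=
  [/\ (t' < t)%N, is_event S q t' &
      forall t'', (t' < t'')%N -> (t'' < t)%N -> ~ is_event S q t''].

Definition leadsto (S : nat -> {set V}) (x y : V * nat) : Prop :=
  let (q, t') := x in let (p, t) := y in
  [/\ is_event S p t, (0 < t)%N, (q = p \/ e p q) & last_event_before S q t t'].

Definition causal (S : nat -> {set V}) : relation (V * nat) :=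
  clos_refl_trans (V * nat) (leadsto S).

Definition is_cut (S : nat -> {set V}) (C : V -> nat) : Prop :=
  forall p, is_event S p (C p).

Definition coherent (S : nat -> {set V}) (C : V -> nat) : Prop :=
  forall q t' p t, causal S (q, t') (p, t) -> causal S (p, t) (p, C p) ->
    causal S (q, t') (q, C q).

(* lifted clocks: lifted_clock S base t p = widetilde{p^t.r} with widetilde{p^0.r} = base p *)
Fixpoint lifted_clock (S : nat -> {set V}) (base : V -> int) (t : nat) (p : V) : int :=
  match t with
  | 0%N => base p
  | t'.+1 => lifted_clock S base t' p + (if p \in S t' then 1 else 0)
  end.

Definition is_dist (p q : V) (n : nat) : Prop :=
  (exists s, [/\ path e p s, last p s = q & size s = n]) /\
  (forall s, path e p s -> last p s = q -> (n <= size s)%N).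

Definition is_diameter (D : nat) : Prop :=
  (forall p q n, is_dist p q n -> (n <= D)%N) /\ exists p q, is_dist p q D.

End Defs.

(* Main.v *)
Require Import Defs.
From HB Require Import structures.
From mathcomp Require Import all_boot all_order all_algebra.
From Stdlib Require Import Classical.
From Stdlib Require Import Relation_Operators.
Set Implicit Arguments. Unset Strict Implicit. Unset Printing Implicit Defensive.
Import Order.TTheory GRing.Theory Num.Theory.
Local Open Scope ring_scope.

Section H.
Variables (V : finType) (e : rel V) (M : nat).
Hypothesis M3 : (3 <= M)%N.

Lemma M0 : (M%:Z != 0).
Proof. by rewrite eqz_nat -lt0n; apply: leq_trans M3. Qed.

Lemma ominus_le1 b a : ominus M b a <= 1.
Proof.
rewrite /ominus; case: ifP => // _.
rewrite (@le_trans _ _ 0) // oppr_le0 /resid; exact: modz_ge0 M0.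
Qed.

Lemma modz_cong x : (M%:Z %| x - (x %% M%:Z)%Z)%Z.
Proof.
rewrite {1}(divz_eq x M%:Z) addrK; exact: dvdz_mull.
Qed.

Lemma ominus_cong b a : (M%:Z %| ominus M b a - (b - a))%Z.
Proof.
rewrite /ominus /resid; case: ifP => _.
  rewrite -opprB rpredN; exact: modz_cong.
have -> : - ((a - b) %% M%:Z)%Z - (b - a) = (a - b) - ((a - b) %% M%:Z)%Z.
  by rewrite [- (b - a)]opprB addrC.
exact: modz_cong.
Qed.

Lemma delay_le1 c x s : @delay V M c x s <= (size s)%:Z.
Proof.
elim: s x => //= y s IH x.
rewrite -addn1 PoszD addrC lerD //; exact: ominus_le1.
Qed.

Lemma delay_rcons c x s y :
  @delay V M c x (rcons s y) = @delay V M c x s + ominus M (c y)%:Z (c (last x s))%:Z.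
Proof.
elim: s x => [|z s IH] x /=; first by rewrite !addr0 add0r.
by rewrite IH addrA.
Qed.

Lemma delay_cong c x s :
  (M%:Z %| @delay V M c x s - ((c (last x s))%:Z - (c x)%:Z))%Z.
Proof.
elim: s x => [|y s IH] x /=; first by rewrite subrr subr0.
have E (o d x0 y0 z0 : int) : o + d - (z0 - x0) = (o - (y0 - x0)) + (d - (z0 - y0)).
  by rewrite !opprB [RHS]addrACA; congr (_ + _); rewrite addrA subrK.
rewrite (E _ _ _ (c y)%:Z).
by rewrite rpredD // ominus_cong.
Qed.


Lemma dvd_small n : (M%:Z %| n%:Z)%Z -> (0 < n)%N -> (n < M)%N -> False.
Proof.
rewrite dvdzE /= => Hd Hn HM.
have := dvdn_leq Hn Hd; by rewrite leqNgt HM.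
Qed.

Lemma id3 (x a b c : int) : (x + a - b) - (x - c) = a + (c - b).
Proof. by rewrite opprB addrC -[x + a - b]addrA addrA subrK addrCA. Qed.
Lemma id1 (x g : int) : (x + 1 - g) - (x - g) = 1.
Proof. by rewrite id3 subrr addr0. Qed.
Lemma id2 (x gq gp : int) : (x + 1 - gq) - (x - gp) + (gq + 1 - gp) = 2%:Z.
Proof.
rewrite id3 -[gq + 1 - gp]addrA addrACA addrC -addrA addrCA.
rewrite addrA [1 - gp + _]addrA subrK addrACA addNr addr0; exact: erefl.
Qed.
Lemma id4 (x g r : int) : x + 1 - r = (x - g) + ((g + 1) - r).
Proof. by rewrite addrA [x - g + _]addrA subrK. Qed.
Lemma id5 (a d b : int) : (a + d) - b = d - (b - a).
Proof. by rewrite opprB addrCA addrA. Qed.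

Variables (S : nat -> {set V}) (base : V -> int).
Local Notation L := (lifted_clock S base).

Lemma lcS t p : L t.+1 p = L t p + (if p \in S t then 1 else 0).
Proof. by []. Qed.

Lemma lc_step t p : L t p <= L t.+1 p.
Proof. rewrite lcS; case: ifP => _; by rewrite ?addr0 // lerDl. Qed.

Lemma lc_le1 t p : L t.+1 p <= L t p + 1.
Proof. rewrite lcS; case: ifP => _ //; by rewrite addr0 lerDl. Qed.

Lemma lc_mono u v p : (u <= v)%N -> L u p <= L v p.
Proof.
move/subnK => <-; elim: (v - u)%N => [|n IH]; first by rewrite add0n.
rewrite addSn; exact: le_trans IH (lc_step _ _).
Qed.

Lemma is_eventP p t : is_event S p t <-> ((t == 0)%N || (p \in S t.-1)).
Proof.
split.
- case=> [->|[t0 [-> H]]] //=; by rewrite H orbT.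
- case: t => [|t] /= H; [by left | by right; exists t].
Qed.

Lemma lc_hit p m b : L 0 p <= m -> m <= L b p -> exists u, L u p = m.
Proof.
elim: b => [|b IH] H0 Hb.
  by exists 0%N; apply/le_anti; rewrite H0 Hb.
case: (lerP m (L b p)) => Hm; first exact: IH.
exists b.+1; apply/le_anti; rewrite Hb andbT.
apply: le_trans (lc_le1 b p) _; by rewrite lezD1.
Qed.

Lemma lc_unb p (fr : fair S) (n : nat) : exists b, L 0 p + n%:Z <= L b p.
Proof.
elim: n => [|n [b Hb]]; first by exists 0%N; rewrite addr0.
have [t' [Hbt Hin]] := fr p b.
exists t'.+1; rewrite lcS Hin.
apply: (@le_trans _ _ (L b p + 1)).
  by rewrite -addn1 PoszD addrA lerD2r.
rewrite lerD2r; exact: lc_mono.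
Qed.

Lemma lc_unb' p (fr : fair S) (m : int) : exists b, m <= L b p.
Proof.
have [b Hb] := lc_unb p fr `|m - L 0 p|%N.
exists b; apply: le_trans Hb; rewrite abszE.
have := ler_norm (m - L 0 p); rewrite -(lerD2l (L 0 p)).
by rewrite addrCA subrr addr0.
Qed.

Definition Inv (gamma : nat -> V -> nat) t :=
  (forall p, (M%:Z %| L t p - (gamma t p)%:Z)%Z) /\
  (forall p q, e p q -> L t q <= L t p + 1).

Lemma inv_all gamma : execution e M gamma S -> symmetric e -> Inv gamma 0 ->
  forall t, Inv gamma t.
Proof.
move=> Hex Hsym H0; elim=> // t [Hc Hb].
have [_ Hen Hg] := Hex t.
split.
- move=> p; rewrite lcS Hg; case: ifP => _; last by rewrite addr0.
  rewrite -modz_nat -[(gamma t p).+1]addn1 PoszD.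
  rewrite (id4 _ (gamma t p)%:Z) rpredD //; exact: modz_cong.
- move=> p q Hpq; rewrite !lcS.
  have Hqp : L t p <= L t q + 1 by apply: Hb; rewrite Hsym.
  have Hpq' := Hb p q Hpq.
  case Ep: (p \in S t); case Eq: (q \in S t).
  + by rewrite lerD2r.
  + rewrite addr0; apply: le_trans Hpq' _; by rewrite lerDl.
  + rewrite addr0 lerD2r.
    case: (lerP (L t q) (L t p)) => // Hlt; exfalso.
    have Heq : L t q = L t p + 1 by apply/le_anti; rewrite Hpq' lezD1 Hlt.
    have Hcq := Hc q; have Hcp := Hc p; rewrite Heq in Hcq.
    have Heqp : e q p by rewrite Hsym.
    case: (Hen q Eq p Heqp) => Hg'.
    * have := rpredB Hcq Hcp; rewrite Hg' id1.
      move/dvd_small; apply => //; exact: leq_trans _ M3.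
    * have Hm : (M%:Z %| ((gamma t q)%:Z + 1) - (gamma t p)%:Z)%Z.
        rewrite Hg' -modz_nat -[(gamma t q).+1]addn1 PoszD; exact: modz_cong.
      have := rpredD (rpredB Hcq Hcp) Hm; rewrite id2.
      move/dvd_small; apply => //.
  + by rewrite !addr0.
Qed.


Lemma lc_const q t' t1 : (forall u, (t' <= u)%N -> (u < t1)%N -> q \notin S u) ->
  forall n, (t' + n <= t1)%N -> L (t' + n) q = L t' q.
Proof.
move=> Hno; elim=> [|n IH] H; first by rewrite addn0.
have Hu : (t' + n < t1)%N by rewrite -addnS.
rewrite addnS lcS (negbTE (Hno _ (leq_addr _ _) Hu)) addr0 IH //.
exact: ltnW.
Qed.

Lemma leadsto_le gamma : execution e M gamma S -> (forall t, Inv gamma t) ->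
  forall q t' p t, leadsto e S (q, t') (p, t) ->
    is_event S q t' /\ L t' q <= L t p.
Proof.
move=> Hex Hinv q t' p t [Hev Ht0 Hqp [Hlt Hev' Hno]]; split => //.
case: Hqp => [->|Hpq]; first exact/lc_mono/ltnW.
case: t Hev Ht0 Hlt Hno => // t1 Hev _ Hlt Hno.
have Hp : p \in S t1.
  by move/is_eventP: Hev.
have Hno' : forall u, (t' <= u)%N -> (u < t1)%N -> q \notin S u.
  move=> u H1 H2; apply/negP => Hu; apply: (Hno u.+1) => //.
  by apply/is_eventP; rewrite /= Hu.
have := lc_const Hno' (n := (t1 - t')%N); rewrite subnKC // => <- //.
rewrite lcS Hp; have [_ Hb] := Hinv t1; exact: Hb.
Qed.

Lemma causal_le gamma : execution e M gamma S -> (forall t, Inv gamma t) ->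
  forall x y, causal e S x y ->
    x = y \/ (is_event S x.1 x.2 /\ L x.2 x.1 <= L y.2 y.1).
Proof.
move=> Hex Hinv x y; elim.
- move=> [q t'] [p t] H; right; exact: leadsto_le H.
- by left.
- move=> a b c _ [->|[Ha Hab]] _ [<-|[Hb Hbc]]; [by left|by right|by right|].
  right; split => //; exact: le_trans Hab Hbc.
Qed.

Lemma last_ev q a b : is_event S q a -> (a < b)%N ->
  exists b', (a <= b')%N /\ last_event_before S q b b'.
Proof.
move=> Ha; elim: b => // b IH Hab.
case E: ((b == 0)%N || (q \in S b.-1)).
- exists b; split; first by [].
  split => //; first by apply/is_eventP.
  by move=> t'' H1 H2; rewrite ltnS leqNgt H1 in H2.
- have Hab' : (a < b)%N.
    rewrite ltn_neqAle -ltnS Hab andbT; apply/eqP => Eab.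
    by move: Ha; rewrite Eab => /is_eventP; rewrite E.
  have [b' [H1 [H2 H3 H4]]] := IH Hab'.
  exists b'; split => //; split => //; first exact: ltnW.
  move=> t'' H5 H6; case: (ltngtP t'' b) => Ht.
  + exact: H4.
  + by rewrite ltnS leqNgt Ht in H6.
  + by rewrite Ht => /is_eventP; rewrite E.
Qed.

Lemma same_proc q a b : is_event S q a -> (a <= b)%N -> is_event S q b ->
  causal e S (q, a) (q, b).
Proof.
move=> Ha; elim/ltn_ind: b => b IH Hab Hb.
case: (ltngtP a b) Hab => // [Hlt _|-> _]; last exact: rt_refl.
have [b' [H1 Hl]] := last_ev Ha Hlt.
have [H2 H3 _] := Hl.
apply: rt_trans (IH b' H2 H1 H3) _.
apply: rt_step; split => //; last by left.
exact: leq_ltn_trans (leq0n a) Hlt.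
Qed.

End H.

Lemma shortest (V : finType) (e : rel V) x y : forall n (s : seq V),
  (size s <= n)%N -> path e x s -> last x s = y ->
  exists m, (m <= size s)%N /\ is_dist e x y m.
Proof.
elim=> [|n IH] s Hs Hp Hl;
  case: (classic (forall s', path e x s' -> last x s' = y -> (size s <= size s')%N))
    => [H|H]; try by exists (size s); split => //; split => //; exists s.
- move/not_all_ex_not: H => [s' Hs'].
  have Hlt : (size s' < size s)%N.
    by rewrite ltnNge; apply/negP => Hle; apply: Hs' => _ _.
  by move: Hs; rewrite leqNgt (leq_ltn_trans (leq0n _) Hlt).
- move/not_all_ex_not: H => [s' Hs'].
  have Hp' : path e x s' by apply: NNPP => Hn; apply: Hs' => /Hn.
  have Hl' : last x s' = y by apply: NNPP => Hn; apply: Hs' => _ /Hn.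
  have Hlt : (size s' < size s)%N.
    by rewrite ltnNge; apply/negP => Hle; apply: Hs' => _ _.
  have Hs'n : (size s' <= n)%N by rewrite -ltnS (leq_trans Hlt Hs).
  have [m [Hm Hd]] := IH s' Hs'n Hp' Hl'.
  exists m; split => //; exact: leq_trans Hm (ltnW Hlt).
Qed.

Theorem lemma2 (V : finType) (e : rel V) (M : nat)
    (gamma : nat -> V -> nat) (S : nat -> {set V})
    (delta0 : V -> V -> int) (p0 : V) (D : nat) :
  symmetric e -> irreflexive e -> (forall p q, connect e p q) ->
  (1 < #|V|)%N -> (3 <= M)%N ->
  (forall p, (gamma 0%N p < M)%N) ->
  execution e M gamma S -> fair S ->
  WU0 e M (gamma 0%N) -> delta_spec e M (gamma 0%N) delta0 ->
  (forall q, 0 <= delta0 p0 q) ->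
  is_diameter e D ->
  forall k : int, (gamma 0%N p0)%:Z + D%:Z <= k ->
  exists C : V -> nat,
    (forall p,
       lifted_clock S (fun q => (gamma 0%N p0)%:Z + delta0 p0 q) (C p) p = k /\
       (forall t, lifted_clock S (fun q => (gamma 0%N p0)%:Z + delta0 p0 q) t p = k ->
                  (C p <= t)%N)) /\
    is_cut S C /\ coherent e S C.
Proof.
move=> Hsym _ Hconn _ M3 _ Hex Hfair _ Hdelta _ [HD _] k Hk.
set base := fun q => (gamma 0%N p0)%:Z + delta0 p0 q.
have Hinv0 : Inv e M S base gamma 0.
  split.
  - move=> p; have /connectP [s Hp Hl] := Hconn p0 p.
    rewrite /= /base Hl -(Hdelta p0 s Hp) id5; exact: delay_cong.
  - move=> p q Hpq; have /connectP [s Hp Hl] := Hconn p0 p.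
    have Hp' : path e p0 (rcons s q) by rewrite rcons_path Hp -Hl Hpq.
    rewrite /= /base.
    have := Hdelta p0 _ Hp'; rewrite last_rcons delay_rcons (Hdelta p0 s Hp) -Hl => <-.
    rewrite -addrA lerD2l lerD2l; exact: ominus_le1.
have Hinv := inv_all M3 Hex Hsym Hinv0.
have Hdle : forall p, delta0 p0 p <= D%:Z.
  move=> p; have /connectP [s Hp Hl] := Hconn p0 p.
  have [m [_ Hd]] := shortest (leqnn (size s)) Hp (esym Hl).
  have HmD := HD _ _ _ Hd; case: Hd => [[s' [Hp' Hl' Hsz]] _].
  rewrite -Hl' -(Hdelta p0 s' Hp'); apply: le_trans (delay_le1 M3 _ _ _) _.
  by rewrite Hsz lez_nat.
have Hexk : forall p, exists t, lifted_clock S base t p == k.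
  move=> p; have [b Hb] := lc_unb' base p Hfair k.
  have H0 : lifted_clock S base 0 p <= k.
    apply: le_trans Hk; rewrite /= /base lerD2l; exact: Hdle.
  have [u Hu] := lc_hit H0 Hb; exists u; exact/eqP.
pose C := fun p => ex_minn (Hexk p).
have HC : forall p, lifted_clock S base (C p) p = k /\
    (forall t, lifted_clock S base t p = k -> (C p <= t)%N).
  move=> p; rewrite /C; case: ex_minnP => m /eqP Hm Hmin; split => //.
  by move=> t Ht; apply: Hmin; apply/eqP.
have Hcut : is_cut S C.
  move=> p; apply/is_eventP; have [H1 H2] := HC p.
  case E: (C p) => [|m] //=.
  move: H1; rewrite E lcS; case: ifP => // _; rewrite addr0 => H.
  by have := H2 _ H; rewrite E ltnn.
exists C; split => //; split => //.
move=> q t' p t H1 H2.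
have H12 := rt_trans _ _ _ _ _ H1 H2.
case: (causal_le Hex Hinv H12) => [[-> ->]|[/= Hev Hle]]; first exact: rt_refl.
have [Hq1 Hq2] := HC q; have [Hp1 _] := HC p.
rewrite Hp1 in Hle.
apply: same_proc => //.
rewrite leqNgt; apply/negP => Hlt.
have Heq : lifted_clock S base t' q = k.
  apply/le_anti; rewrite Hle -{1}Hq1; exact: lc_mono (ltnW Hlt).
clear H1 H2 H12; move/is_eventP: Hev; case: t' Hlt Heq Hle => // u Hlt Heq _ /= Hu.
have := lc_mono S base q (Hlt : (C q <= u)%N); rewrite Hq1.
move: Heq; rewrite lcS Hu => <-.
by rewrite -subr_ge0 opprD addrA subrr add0r oppr_ge0.
Qed.
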